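(* Let $G=(V,E)$ be a graph, $c\ge1$, $\epsilon\in[0,1/3)$, let $\kappa(G)=(V,\kappa(E))$ be an $(\epsilon,c)$-kernel of $G$ with tight nodes $\kappa_T(V)$, and let $M$ be a maximal matching in $\kappa(G)$. Let $F_T$ be the set of tight nodes that are not matched in $M$. Then $|F_T|\le(2+6\epsilon)|M|$.
   Context: Let $\mathcal N_v$ denote the set of neighbors of $v$ in $G$. A subgraph $\kappa(G)=(V,\kappa(E))$ with $\kappa(E)\subseteq E$ is given, together with a partition of $V$ into tight nodes $\kappa_T(V)$ and slack nodes $\kappa_S(V)$. For $v\in V$ let $\kappa(\mathcal N_v)=\{u\in\mathcal N_v:(u,v)\in\kappa(E)\}$ (the friends of $v$). For $c\ge1$ and $\epsilon\in[0,1/3)$, $\kappa(G)$ is an $(\epsilon,c)$-kernel of $G$ (w.r.t. this partition) iff: (i) $|\kappa(\mathcal N_v)|\le(1+\epsilon)c$ for all $v\in V$; (ii) $|\kappa(\mathcal N_v)|\ge(1-\epsilon)c$ for all $v\in\kappa_T(V)$; (iii) for all $u,v\in\kappa_S(V)$, if $(u,v)\in E$ then $(u,v)\in\kappa(E)$. *)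

(* Defs.v *)
From HB Require Import structures.
From mathcomp Require Import all_boot all_order all_algebra.
Set Implicit Arguments. Unset Strict Implicit. Unset Printing Implicit Defensive.
Import Order.TTheory GRing.Theory Num.Theory.
Local Open Scope ring_scope.

Definition simple_graph (V : finType) (E : rel V) : Prop :=
  (forall u v, E u v = E v u) /\ (forall v, ~~ E v v).

Definition friends (V : finType) (K : rel V) (v : V) : {set V} := [set u | K v u].

(* kappa(G) = (V, K) with tight nodes T (slack nodes = ~: T) is an (eps, c)-kernel of G = (V, E). *)
Definition is_kernel (R : realFieldType) (V : finType) (E K : rel V) (T : {set V})
    (eps c : R) : Prop :=
  [/\ (forall u v, K u v = K v u),
      (forall u v, K u v -> E u v),
      (forall v, (#|friends K v|%:R : R) <= (1 + eps) * c),
      (forall v, v \in T -> (1 - eps) * c <= (#|friends K v|%:R : R)) &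
      (forall u v, u \notin T -> v \notin T -> E u v -> K u v)].

Definition is_matching (V : finType) (K : rel V) (M : {set {set V}}) : Prop :=
  (forall e, e \in M -> exists u v, [/\ u != v, K u v & e = [set u; v]]) /\
  (forall e f, e \in M -> f \in M -> e != f -> [disjoint e & f]).

Definition is_maximal_matching (V : finType) (K : rel V) (M : {set {set V}}) : Prop :=
  is_matching K M /\
  (forall u v, K u v -> exists2 e, e \in M & (u \in e) || (v \in e)).

Definition free_tight (V : finType) (T : {set V}) (M : {set {set V}}) : {set V} :=
  [set v in T | v \notin cover M].

(* Main.v *)
Require Import Defs.
From HB Require Import structures.
From mathcomp Require Import all_boot all_order all_algebra.
From mathcomp Require Import ring lra.
Import Order.TTheory GRing.Theory Num.Theory.
Local Open Scope ring_scope.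

Theorem lemma3p12 (R : realFieldType) (V : finType) (E K : rel V) (T : {set V})
    (eps c : R) (M : {set {set V}}) :
  simple_graph E ->
  1 <= c -> 0 <= eps -> eps < 1 / 3 ->
  is_kernel E K T eps c ->
  is_maximal_matching K M ->
  (#|free_tight T M|%:R : R) <= (2 + 6 * eps) * (#|M|%:R : R).
Proof.
move=> [Esym Eirr] c1 eps0 eps3 [Ksym KE Kup Klo KS] [[Medge Mdisj] Mmax].
set F := free_tight T M; set C := cover M.
have Cle : (#|C| <= 2 * #|M|)%N.
  apply: leq_trans (leq_card_cover M).1 _.
  rewrite (eq_bigr (fun _ => 2%N)) ?sum_nat_const 1?mulnC //.
  move=> e /Medge [u [v [uv _ ->]]]; by rewrite cards2 uv.
have frC : forall v, v \in F -> friends K v \subset C.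
  move=> v; rewrite inE => /andP [_ vC]; apply/subsetP => w; rewrite inE => Kvw.
  apply/negPn/negP => wC.
  have [e eM /orP [ve|we]] := Mmax v w Kvw.
    by move/negP: vC; apply; apply/bigcupP; exists e.
  by move/negP: wC; apply; apply/bigcupP; exists e.
have D : (\sum_(v in F) #|friends K v| <= \sum_(w in C) #|friends K w|)%N.
  rewrite (eq_bigr (fun v => (\sum_(w in C) (K v w : nat))%N)); last first.
    move=> v vF; rewrite -big_mkcondr /= sum1_card.
    apply: eq_card => w; rewrite inE unfold_in /= andbC.
    case Kvw: (K v w) => //=.
    by apply/esym; apply: (subsetP (frC v vF)); rewrite inE.
  rewrite exchange_big /=; apply: leq_sum => w _.
  rewrite -big_mkcondr /= sum1_card; apply: subset_leq_card.
  apply/subsetP => v; rewrite !inE => /andP [_ Kvw]; by rewrite Ksym.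
have lo : (#|F|%:R * ((1 - eps) * c) <= \sum_(v in F) (#|friends K v|%:R : R)).
  rewrite mulr_natl -sumr_const; apply: ler_sum => v.
  by rewrite inE => /andP [vT _]; apply: Klo.
have up : (\sum_(w in C) (#|friends K w|%:R : R)) <= #|C|%:R * ((1 + eps) * c).
  rewrite mulr_natl -sumr_const; apply: ler_sum => w _; exact: Kup.
have D' : (\sum_(v in F) (#|friends K v|%:R : R)) <= \sum_(w in C) (#|friends K w|%:R : R).
  by rewrite -!natr_sum ler_nat.
have Cle' : (#|C|%:R : R) <= 2 * #|M|%:R.
  by rewrite -natrM ler_nat.
have key : (#|F|%:R : R) * (1 - eps) * c <= 2 * #|M|%:R * (1 + eps) * c.
  have := le_trans lo (le_trans D' up).
  move=> H; apply: le_trans (_ : #|C|%:R * ((1 + eps) * c) <= _).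
    by rewrite -mulrA.
  rewrite mulrA ler_pM2r; last by lra.
  by rewrite ler_pM2r; last lra.
have key2 : (#|F|%:R : R) * (1 - eps) <= 2 * #|M|%:R * (1 + eps).
  by rewrite -(ler_pM2r (_ : 0 < c)); [exact: key | lra].
have F0 : (0 : R) <= #|F|%:R by [].
have M0 : (0 : R) <= #|M|%:R by [].
have P : 0 <= #|M|%:R * (eps * (1 - 3 * eps)).
  apply: mulr_ge0 => //; apply: mulr_ge0 => //; lra.
have key3 : (#|F|%:R : R) * (1 - eps) <= (2 + 6 * eps) * #|M|%:R * (1 - eps).
  apply: le_trans key2 _.
  have -> : (2 + 6 * eps) * #|M|%:R * (1 - eps) = 2 * #|M|%:R * (1 + eps) + 2 * (#|M|%:R * (eps * (1 - 3 * eps))) by ring.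
  by rewrite lerDl mulr_ge0.
by rewrite -(ler_pM2r (_ : 0 < 1 - eps)); [exact: key3 | lra].
Qed.
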